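(* Let $f\colon\Delta\to\Delta$ be a Bernoulli Young tower with $\mathbb P_{\mathcal A}(h_{\mathcal A}=n)=\theta(1-\theta)^{n-1}$ for all $n\ge1$, for some $0<\theta<1$, and let $D,\mathbb P_D$, $g\colon D\to\Delta$ and $D_k(x)$ be as in the context. Fix $p>2$ and let $$\delta_{k,p}=\int_D\sup_{x'\in D_k(x)}d^p(g(x),g(x'))\,d\mathbb P_D(x).$$ Then there exist $C_\delta>0$ and $0<\theta_\delta<1$ such that $\delta_{k,p}\le C_\delta\theta_\delta^{|k|}$ for all $k\in\mathbb Z$.
   Context: Bernoulli Young tower: given an at most countable probability space $(\mathcal{A},\mathbb{P}_{\mathcal A})$, an integrable $h_{\mathcal A}\colon\mathcal A\to\mathbb N$ and $0<\xi<1$, let $(X,\mathbb P_X)=(\mathcal A^{\mathbb N},\mathbb P_{\mathcal A}^{\mathbb N})$ with left shift $f_X$, $h(a_0,a_1,\dots)=h_{\mathcal A}(a_0)$, $\Delta=\{(x,\ell)\in X\times\mathbb Z:0\le\ell<h(x)\}$, $f(x,\ell)=(x,\ell+1)$ if $\ell<h(x)-1$ and $f(x,\ell)=(f_Xx,0)$ if $\ell=h(x)-1$. On $X$, $d(x,y)=\xi^{s(x,y)}$ with $s((a_j),(b_j))=\inf\{j\ge0:a_j\ne b_j\}$; on $\Delta$, $d((x,k),(y,j))=1$ if $k\ne j$ and $=d(x,y)$ if $k=j$. Construction: let $(\Omega,\mathbb P_\Omega)$ be a probability space carrying random variables $A_n\colon\Omega\to\mathcal A$, $n\ge1$, with $\mathbb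 P(A_n=a)=\mathbb P_{\mathcal A}(a)/\mathbb P_{\mathcal A}(h_{\mathcal A}=n)$ if $h_{\mathcal A}(a)=n$ and $0$ otherwise. Let $Z=\{0,1\}$ with $\mathbb P_Z(1)=\theta$, $\mathbb P_Z(0)=1-\theta$, $D=\Omega^{\mathbb Z}\times Z^{\mathbb Z}$ with $\mathbb P_D=\mathbb P_\Omega^{\mathbb Z}\times\mathbb P_Z^{\mathbb Z}$. For $x=((\omega_j)_{j\in\mathbb Z},(z_j)_{j\in\mathbb Z})\in D$ let $t_0(x)=\sup\{k\le0:z_k=1\}$ and $t_n(x)=\inf\{k>t_{n-1}(x):z_k=1\}$ for $n\ge1$ (finite a.s.). Define $g(x)=(y,-t_0(x))$ with $y=(A_{t_1-t_0}(\omega_{t_0}),A_{t_2-t_1}(\omega_{t_1}),\dots)\in X$. For $k\in\mathbb Z$, $D_k(x)$ is the set of $x'=((\omega'_j),(z'_j))\in D$ with $\omega'_j=\omega_j$ and $z'_j=z_j$ for all $j\ne k$. *)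

(* Defs.v *)
From HB Require Import structures.
From mathcomp Require Import all_boot all_order all_algebra.
From mathcomp Require Import all_classical all_reals all_analysis.
Set Implicit Arguments. Unset Strict Implicit. Unset Printing Implicit Defensive.
Import Order.TTheory GRing.Theory Num.Theory.
Local Open Scope classical_set_scope.
Local Open Scope ring_scope.

Section Bernoulli.
Variables (R : realType) (A : countType) (Omega : Type).

Definition seqX := nat -> A.

Definition dX (xi : R) (x y : seqX) : R :=
  match pselect (exists j : nat, `[< x j <> y j >]) with
  | left H => xi ^+ (ex_minn H)
  | right _ => 0
  end.

(* Metric on the tower: points are pairs (x, level). *)
Definition dDelta (xi : R) (u v : seqX * nat) : R :=
  if u.2 != v.2 then 1 else dX xi u.1 v.1.

(* D = Omega^Z x Z^Z, with Z = {0,1} encoded as bool (true = 1). *)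
Definition Dt := ((int -> Omega) * (int -> bool))%type.

(* t_0(x) = sup{k <= 0 : z_k = 1}; default 0 on the (null) event where it is undefined *)
Definition t0 (z : int -> bool) : int :=
  match pselect (exists m : nat, `[< z (- (m%:Z)) = true >]) with
  | left H => - ((ex_minn H)%:Z)
  | right _ => 0
  end.

(* next one after t: inf{k > t : z_k = 1}; default t+1 on the (null) event where undefined *)
Definition tnext (z : int -> bool) (t : int) : int :=
  match pselect (exists m : nat, `[< z (t + (m.+1)%:Z) = true >]) with
  | left H => t + ((ex_minn H).+1)%:Z
  | right _ => t + 1
  end.

Fixpoint tn (z : int -> bool) (n : nat) : int :=
  match n with
  | 0 => t0 z
  | n'.+1 => tnext z (tn z n')
  end.

(* g(x) = (y, -t_0(x)),  y_i = A_{t_{i+1} - t_i}(omega_{t_i}) ;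
   An n : Omega -> A is the random variable A_n (n >= 1). *)
Definition gmap (An : nat -> Omega -> A) (x : Dt) : seqX * nat :=
  let z := x.2 in
  ((fun i : nat => An `|tn z i.+1 - tn z i|%N (x.1 (tn z i))), `|t0 z|%N).

Definition Dk (k : int) (x : Dt) : set Dt :=
  [set x' | forall j : int, j != k -> x'.1 j = x.1 j /\ x'.2 j = x.2 j].

End Bernoulli.

Definition Dgen (d : measure_display) (Omega : measurableType d) : set (set (Dt Omega)) :=
  [set S | exists (j : int) (B : set Omega), measurable B /\
              S = (fun x : Dt Omega => x.1 j) @^-1` B]
  `|` [set S | exists (j : int) (C : set bool),
              S = (fun x : Dt Omega => x.2 j) @^-1` C].

Definition Dtype (d : measure_display) (Omega : measurableType d) :=
  g_sigma_algebraType (@Dgen d Omega).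

Definition PZ (R : realType) (theta : R) (C : set bool) : R :=
  (if `[< C true >] then theta else 0) + (if `[< C false >] then 1 - theta else 0).

(* P_D is the product measure P_Omega^Z x P_Z^Z: it agrees with the product
   of the marginals on every finite-dimensional measurable cylinder. *)
Definition is_product_measure (R : realType) (d : measure_display)
  (Omega : measurableType d) (POm : probability Omega R) (theta : R)
  (PD : probability (Dtype Omega) R) : Prop :=
  forall (J : seq int) (B : int -> set Omega) (C : int -> set bool),
    uniq J -> (forall j, j \in J -> measurable (B j)) ->
    PD [set x : Dtype Omega | forall j, j \in J -> B j (x.1 j) /\ C j (x.2 j)]
    = (\prod_(j <- J) (POm (B j) * (PZ theta (C j))%:E))%E.

Definition PA_h (R : realType) (A : countType) (pA : A -> R) (hA : A -> nat) (n : nat) : R :=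
  fine (\esum_(a in [set a | hA a = n]) (pA a)%:E)%E.

(* Main.v *)
Require Import Defs.
From HB Require Import structures.
From mathcomp Require Import all_boot all_order all_algebra.
From mathcomp Require Import all_classical all_reals all_analysis.
From mathcomp Require Import zify ring lra measurable_realfun.
Import Order.TTheory GRing.Theory Num.Theory.
Local Open Scope classical_set_scope.
Local Open Scope ring_scope.
Set Implicit Arguments. Unset Strict Implicit. Unset Printing Implicit Defensive.
Lemma ex_minn_eq (P : pred nat) (exP : exists n, P n) n :
  P n -> (forall m, (m < n)%N -> ~~ P m) -> ex_minn exP = n.
Proof.
move=> Pn Hm; case: ex_minnP => m Pm minm.
apply/eqP; rewrite eqn_leq minm //= leqNgt; apply/negP => /Hm.
by rewrite Pm.
Qed.

Section Z.
Variable z : int -> bool.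

Lemma t0_le0 : t0 z <= 0.
Proof. rewrite /t0; case: pselect => // H; lia. Qed.

Lemma t0_after j : t0 z < j -> j <= 0 -> z j = false.
Proof.
rewrite /t0; case: pselect => [H|H] h1 h2.
  case: ex_minnP h1 => m Pm minm h1.
  apply/negP => zj; have := minm `|j|%N; rewrite asboolE.
  have -> : (- `|j|%:Z = j) by lia.
  by move=> /(_ zj); lia.
apply/negP => zj; apply: H; exists `|j|%N; rewrite asboolE.
by have -> : (- `|j|%:Z = j) by lia.
Qed.

Lemma t0_true j : z j -> j <= 0 -> z (t0 z).
Proof.
move=> zj j0; rewrite /t0; case: pselect => [H|H].
  by case: ex_minnP => m; rewrite asboolE.
exfalso; apply: H; exists `|j|%N; rewrite asboolE.
by have -> : (- `|j|%:Z = j) by lia.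
Qed.

Lemma t0_ge j : z j -> j <= 0 -> j <= t0 z.
Proof.
move=> zj j0; rewrite leNgt; apply/negP => h.
by have := t0_after h j0; rewrite zj.
Qed.

Lemma tnext_gt t : t < tnext z t.
Proof. rewrite /tnext; case: pselect => // H; lia. Qed.

Lemma tnext_before t j : t < j -> j < tnext z t -> z j = false.
Proof.
rewrite /tnext; case: pselect => [H|H] h1 h2.
  case: ex_minnP h2 => m Pm minm h2.
  apply/negP => zj; have := minm `|(j - t - 1)%R|%N; rewrite asboolE.
  have -> : (t + (`|(j - t - 1)%R|%N.+1)%:Z = j) by lia.
  by move=> /(_ zj); lia.
lia.
Qed.

Lemma tnext_true t j : t < j -> z j -> z (tnext z t).
Proof.
move=> tj zj; rewrite /tnext; case: pselect => [H|H].
  by case: ex_minnP => m; rewrite asboolE.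
exfalso; apply: H; exists `|(j - t - 1)%R|%N; rewrite asboolE.
by have -> : (t + (`|(j - t - 1)%R|%N.+1)%:Z = j) by lia.
Qed.

Lemma tnext_le t j : t < j -> z j -> tnext z t <= j.
Proof.
move=> tj zj; rewrite leNgt; apply/negP => h.
by have := tnext_before tj h; rewrite zj.
Qed.

Lemma tn_mono n : t0 z <= tn z n.
Proof.
elim: n => [|n IH] /=; first by [].
by apply: le_trans IH _; apply/ltW/tnext_gt.
Qed.

Lemma tn_le m n : (m <= n)%N -> tn z m <= tn z n.
Proof.
move=> /subnK <-; elim: (n - m)%N => [|k IH] //=.
by apply: le_trans IH _; apply/ltW/tnext_gt.
Qed.
End Z.

Lemma tnext_char (z : int -> bool) t r : t < r -> z r ->
  (forall j, t < j -> j < r -> z j = false) -> tnext z t = r.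
Proof.
move=> tr zr hb; apply/eqP; rewrite eq_le tnext_le //=.
rewrite leNgt; apply/negP => h.
have := tnext_true tr zr; rewrite hb //; exact: tnext_gt.
Qed.

Lemma t0_char (z : int -> bool) s : s <= 0 -> z s ->
  (forall j, s < j -> j <= 0 -> z j = false) -> t0 z = s.
Proof.
move=> s0 zs hb; apply/eqP; rewrite eq_le t0_ge // andbT.
rewrite leNgt; apply/negP => h.
by have := t0_true zs s0; rewrite hb // t0_le0.
Qed.

Lemma tnext_eq (z z' : int -> bool) t :
  (forall j, t < j -> z j = z' j) -> tnext z t = tnext z' t.
Proof.
move=> E; rewrite /tnext.
have E' : forall m : nat, z (t + m.+1%:Z) = z' (t + m.+1%:Z).
  by move=> m; apply: E; lia.
case: pselect => [H|H]; case: pselect => [H'|H'] //.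
- congr (_ + _); congr ((_ : nat).+1%:Z); apply: eq_ex_minn => m.
  by rewrite E'.
- by exfalso; apply: H'; case: H => m; rewrite E' => h; exists m.
- by exfalso; apply: H; case: H' => m; rewrite -E' => h; exists m.
Qed.

Lemma t0_eq (z z' : int -> bool) :
  (forall j, j <= 0 -> z j = z' j) -> t0 z = t0 z'.
Proof.
move=> E; rewrite /t0.
have E' : forall m : nat, z (- m%:Z) = z' (- m%:Z).
  by move=> m; apply: E; lia.
case: pselect => [H|H]; case: pselect => [H'|H'] //.
- congr (- (_ : nat)%:Z); apply: eq_ex_minn => m.
  by rewrite E'.
- by exfalso; apply: H'; case: H => m; rewrite E' => h; exists m.
- by exfalso; apply: H; case: H' => m; rewrite -E' => h; exists m.
Qed.
Section P2.
Variables (R : realType) (A : countType) (Omega : Type).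
Variable (xi : R).
Hypotheses (xi_ge0 : 0 <= xi) (xi_le1 : xi <= 1).
Variable (An : nat -> Omega -> A).

Fixpoint Gp (z : int -> bool) (t : int) (n : nat) : R :=
  match n with 0 => 1 | n'.+1 => (if z (t + 1) then xi else 1) * Gp z (t + 1) n' end.

Lemma Gp_cat z a b : forall t, Gp z t (a + b) = Gp z t a * Gp z (t + a%:Z) b.
Proof.
elim: a => [|a IH] t /=; first by rewrite mul1r addr0.
rewrite IH mulrA; congr (_ * Gp z _ b); lia.
Qed.

Lemma Gp_false z a : forall t, (forall j, t < j -> j <= t + a%:Z -> z j = false) ->
  Gp z t a = 1.
Proof.
elim: a => [|a IH] t H //=.
rewrite H; [|lia|lia]; rewrite mul1r IH // => j h1 h2; apply: H; lia.
Qed.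

Lemma Gp_prod z n : forall t,
  Gp z t n = \prod_(i < n) (if z (t + i.+1%:Z) then xi else 1).
Proof.
elim: n => [|n IH] t /=; first by rewrite big_ord0.
rewrite big_ord_recl /= IH; congr (_ * _); apply: eq_bigr => i _.
by have -> : t + 1 + (i.+1)%:Z = t + (bump 0 i).+1%:Z by rewrite /bump /=; lia.
Qed.

Lemma dX_agree (y y' : seqX A) j :
  (forall i, (i < j)%N -> y i = y' i) -> dX xi y y' <= xi ^+ j.
Proof.
move=> H; rewrite /dX; case: pselect => [P|P]; last exact: exprn_ge0.
case: ex_minnP => m Pm _; apply: ler_wiXn2l => //.
rewrite leqNgt; apply/negP => /H; move: Pm; rewrite asboolE; exact.
Qed.

Lemma dX_refl (y : seqX A) : dX xi y y = 0.
Proof.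
rewrite /dX; case: pselect => // P; exfalso; case: P => j; by move/asboolP.
Qed.

Lemma dX_ge0 (y y' : seqX A) : 0 <= dX xi y y'.
Proof. rewrite /dX; case: pselect => // P; exact: exprn_ge0. Qed.

Lemma dX_le1 (y y' : seqX A) : dX xi y y' <= 1.
Proof. rewrite /dX; case: pselect => // P; exact: exprn_ile1. Qed.

Lemma dDelta_ge0 (u v : seqX A * nat) : 0 <= dDelta xi u v.
Proof. rewrite /dDelta; case: ifP => // _; exact: dX_ge0. Qed.

Lemma dDelta_le1 (u v : seqX A * nat) : dDelta xi u v <= 1.
Proof. rewrite /dDelta; case: ifP => // _; exact: dX_le1. Qed.

Section Kpos.
Variables (k : int) (x x' : Dt Omega).
Hypothesis hx' : Dk k x x'.
Let z := x.2.
Let z' := x'.2.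

Lemma hz j : j != k -> z' j = z j.
Proof. by move=> /hx' []. Qed.

Lemma agree_y j : tn z j < k -> (forall i, (i <= j)%N -> tn z' i = tn z i) ->
  forall i, (i < j)%N -> (gmap An x).1 i = (gmap An x').1 i.
Proof.
move=> tk ag i ij /=; rewrite -/z -/z'.
rewrite -[tnext z' (tn z' i)]/(tn z' i.+1) (ag i.+1 ij) (ag i (ltnW ij)) /=.
have ne : tn z i != k.
  by have := tn_le z (ltnW ij); rewrite -/z => h; apply/eqP; lia.
by have [-> _] := hx' ne.
Qed.

Lemma kpos_step N : forall j, (`|k - tn z j|%N <= N)%N -> tn z j < k ->
  (forall i, (i <= j)%N -> tn z' i = tn z i) ->
  dX xi (gmap An x).1 (gmap An x').1 <= xi ^+ j * Gp z (tn z j) (`|k - tn z j|%N.-1).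
Proof.
elim: N => [|N IH] j hN tk ag; first by exfalso; lia.
set t := tn z j.
case: (pselect (exists j0, t < j0 /\ j0 < k /\ z j0)) => [H|Hn].
- case: H => j0 [h1 [h2 h3]].
  set r := tnext z t.
  have tr : t < r by exact: tnext_gt.
  have rj0 : r <= j0 by exact: tnext_le.
  have zr : z r by exact: tnext_true h3.
  have r'eq : tnext z' t = r.
    apply: tnext_char => //; first by rewrite hz //; apply/eqP; lia.
    move=> j1 hj1 hj2; rewrite hz; last by apply/eqP; lia.
    exact: (tnext_before hj1 hj2).
  have ag' : forall i, (i <= j.+1)%N -> tn z' i = tn z i.
    move=> i; rewrite leq_eqVlt => /orP [/eqP ->|]; last exact: ag.
    by rewrite /= ag // r'eq.
  have := IH j.+1; rewrite /= -/t -/r => /(_ _ _ ag').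
  have -> : (`|k - t|%N.-1 = `|r - t|%N.-1 + (`|k - r|%N.-1).+1)%N by lia.
  rewrite Gp_cat /= [Gp z t _]Gp_false; last first.
    move=> j1 hj1 hj2; apply: (tnext_before hj1); rewrite -/r; lia.
  have -> : t + (`|r - t|%N.-1)%:Z + 1 = r by lia.
  rewrite zr mul1r exprSr -mulrA => H; apply: H; lia.
- rewrite Gp_false; last first.
    move=> j1 hj1 hj2; apply/negP => zj1; apply: Hn; exists j1; split => //; lia.
  rewrite mulr1; apply: dX_agree; exact: agree_y.
Qed.
End Kpos.

Lemma kpos_bound (k : int) (x x' : Dt Omega) : 0 < k -> Dk k x x' ->
  dDelta xi (gmap An x) (gmap An x') <=
  \prod_(i < `|k|%N.-1) (if x.2 (i.+1%:Z) then xi else 1).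
Proof.
move=> k0 hx'.
have ht0 : t0 x'.2 = t0 x.2.
  apply: t0_eq => j j0; have jk : j != k by apply/eqP; lia.
  by have [_ ->] := hx' _ jk.
have /= := kpos_step hx' (leqnn _) _ (j := 0%N).
rewrite expr0 mul1r => H.
rewrite /dDelta /= ht0 eqxx /=; apply: le_trans (H _ _) _.
- have := t0_le0 x.2; lia.
- by move=> i; rewrite leqn0 => /eqP ->.
have -> : (`|k - t0 x.2|%N.-1 = `|t0 x.2|%N + `|k|%N.-1)%N.
  have := t0_le0 x.2; lia.
rewrite Gp_cat Gp_false; last first.
  move=> j h1 h2; apply: t0_after => //; have := t0_le0 x.2; lia.
have -> : t0 x.2 + (`|t0 x.2|%N)%:Z = 0 by have := t0_le0 x.2; lia.
rewrite mul1r Gp_prod le_eqVlt; apply/orP; left; apply/eqP.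
apply: eq_bigr => i _; have -> : (0 + i.+1%:Z = i.+1%:Z) by lia. by [].
Qed.

Lemma kneg_eq (k : int) (x x' : Dt Omega) : k <= 0 -> Dk k x x' ->
  (exists j, k < j /\ j <= 0 /\ x.2 j) -> gmap An x' = gmap An x.
Proof.
move=> k0 hx' [j [h1 [h2 h3]]].
have hz j1 : k < j1 -> x'.2 j1 = x.2 j1.
  move=> h; have jk : j1 != k by apply/eqP; lia.
  by have [_ ->] := hx' _ jk.
have hw j1 : k < j1 -> x'.1 j1 = x.1 j1.
  move=> h; have jk : j1 != k by apply/eqP; lia.
  by have [-> _] := hx' _ jk.
have sj : j <= t0 x.2 by exact: t0_ge.
have ht0 : t0 x'.2 = t0 x.2.
  apply: t0_char; [exact: t0_le0| |].
  - by rewrite hz; [exact: t0_true h3 h2|lia].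
  - move=> j1 hj1 hj2; rewrite hz; [exact: t0_after|lia].
have htn n : tn x'.2 n = tn x.2 n.
  elim: n => [|n IH] //=; rewrite IH; apply: tnext_eq => j1 hj1.
  rewrite hz //; have := tn_mono x.2 n; lia.
rewrite /gmap ht0; congr (_, _); apply: funext => i.
rewrite !htn hw //; have := tn_mono x.2 i; lia.
Qed.
End P2.
Lemma le_integral_nm d (T : measurableType d) (R : realType)
  (mu : {measure set T -> \bar R}) (f g : T -> \bar R) :
  (forall x, (0 <= f x)%E) -> (forall x, (f x <= g x)%E) ->
  (\int[mu]_(x in [set: T]) f x <= \int[mu]_(x in [set: T]) g x)%E.
Proof.
move=> f0 fg.
have g0 x : (0 <= g x)%E by apply: le_trans (f0 x) (fg x).
rewrite !ge0_integralE //; apply: ereal_sup_le => _ [h hf <-]; exists h => //= x.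
apply: le_trans (hf x) _; rewrite /patch; case: ifP => // _; exact: fg.
Qed.

Lemma sumE_fin (R : realType) (I : finType) (F : I -> R) :
  (\sum_(i : I) (F i)%:E)%E = (\sum_(i : I) F i)%:E.
Proof. by rewrite sumEFin. Qed.

Section P3.
Variables (R : realType) (d : measure_display) (Omega : measurableType d).
Variables (POm : probability Omega R) (theta : R) (PD : probability (Dtype Omega) R).
Hypothesis PD_prod : is_product_measure POm theta PD.

Lemma meas_cyl n (phi : 'I_n -> int) (s : {ffun 'I_n -> bool}) :
  measurable [set x : Dtype Omega | forall i, x.2 (phi i) = s i].
Proof.
have -> : [set x : Dtype Omega | forall i, x.2 (phi i) = s i] =
   \bigcap_(i in [set: 'I_n]) ((fun x : Dtype Omega => x.2 (phi i)) @^-1` [set s i]).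
  apply/seteqP; split => x /= H.
  - by move=> i _; exact: H.
  - by move=> i; exact: H.
apply: fin_bigcap_measurable; first exact: finite_finset.
move=> i _; apply: sub_gen_smallest; right; by exists (phi i), [set s i].
Qed.

Lemma PD_cyl n (phi : 'I_n -> int) (phi_inj : injective phi) (s : {ffun 'I_n -> bool}) :
  PD [set x : Dtype Omega | forall i, x.2 (phi i) = s i] =
  (\prod_(i < n) (if s i then theta else 1 - theta))%:E.
Proof.
pose C j := [set b : bool | forall i, phi i = j -> b = s i].
have := @PD_prod (map phi (index_enum 'I_n)) (fun _ => setT) C.
rewrite map_inj_uniq // index_enum_uniq => /(_ isT (fun _ _ => measurableT)).
have -> : [set x : Dtype Omega | forall j, j \in map phi (index_enum 'I_n) ->
     [set: Omega] (x.1 j) /\ C j (x.2 j)] =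
   [set x : Dtype Omega | forall i, x.2 (phi i) = s i].
  apply/seteqP; split => x /= H.
  - move=> i; have [_ /(_ i erefl) ->//] := H (phi i) (map_f _ (mem_index_enum i)).
  - move=> j /mapP [i0 _ ->]; split => // i /phi_inj ->; exact: H.
move=> ->; rewrite big_map -prodEFin; apply: eq_bigr => i _.
rewrite probability_setT mul1e; congr (_%:E).
have -> : C (phi i) = [set b | b = s i].
  by apply/seteqP; split => b /= H; [exact: H|move=> i0 /phi_inj ->].
rewrite /PZ; case: (s i).
- by rewrite asboolT // asboolF // addr0.
- by rewrite asboolF // asboolT // add0r.
Qed.

Lemma int_prod n (phi : 'I_n -> int) (phi_inj : injective phi) (a b : R) :
  0 <= a -> 0 <= b ->
  (\int[PD]_(x in [set: Dtype Omega])
     (\prod_(i < n) (if x.2 (phi i) then a else b))%:E =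
   ((theta * a + (1 - theta) * b) ^+ n)%:E)%E.
Proof.
move=> a0 b0.
pose F (s : {ffun 'I_n -> bool}) := \prod_(i < n) (if s i then a else b).
pose Aset (s : {ffun 'I_n -> bool}) := [set x : Dtype Omega | forall i, x.2 (phi i) = s i].
have F0 s : 0 <= F s by apply: prodr_ge0 => i _; case: ifP.
have pw x : (\prod_(i < n) (if x.2 (phi i) then a else b))%:E =
    (\sum_(s : {ffun 'I_n -> bool}) ((F s)%:E * (\1_(Aset s) x)%:E))%E.
  rewrite [RHS](bigD1 [ffun i => x.2 (phi i)]) //= [X in (_ + X)%E]big1 ?adde0.
    rewrite indicE mem_set; last by move=> i; rewrite ffunE.
    by rewrite mule1 /F; congr (_%:E); apply: eq_bigr => i _; rewrite ffunE.
  move=> s hs; rewrite indicE memNset ?mule0 // => H; move/negP: hs; apply.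
  by apply/eqP/ffunP => i; rewrite ffunE H.
under eq_integral do rewrite pw.
have hm s : measurable_fun [set: Dtype Omega] (fun x => ((\1_(Aset s) x : R))%:E).
  by apply/measurable_EFinP;
     apply: measurable_indic; exact: meas_cyl.
have hnn s : forall x : Dtype Omega, setT x -> (0 <= ((\1_(Aset s) x : R))%:E)%E.
  by move=> x _; rewrite lee_fin indicE.
rewrite ge0_integral_sum //; first last.
- by move=> s x _; rewrite -EFinM lee_fin mulr_ge0 // indicE.
- move=> s; apply: measurable_funeM.
  apply/measurable_EFinP.
  apply: measurable_indic; exact: meas_cyl.
rewrite (eq_bigr (fun s => ((F s * \prod_(i < n) (if s i then theta else 1 - theta))%:E))); last first.
  move=> s _; rewrite ge0_integralZl_EFin //.
  rewrite integral_indic //; last exact: meas_cyl.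
  rewrite setIT.
  rewrite EFinM; congr (_ * _)%E; exact: PD_cyl.
rewrite sumE_fin; congr (_%:E).
rewrite -[RHS](_ : \prod_(i < n) \sum_(c : bool)
   ((if c then a else b) * (if c then theta else 1 - theta)) = _); last first.
  by rewrite prodr_const card_ord big_bool /= mulrC [b * _]mulrC.
rewrite bigA_distr_bigA /=; apply: eq_bigr => s _.
by rewrite /F -big_split /=.
Qed.
End P3.
Lemma powR_le_self (R : realType) (c p : R) : 0 <= c -> c <= 1 -> 1 <= p -> c `^ p <= c.
Proof.
move=> c0 c1 p1; have [->|cn0] := eqVneq c 0.
  by rewrite powR0 //; apply/eqP => p0; move: p1; rewrite p0 ler10.
by apply: ge1r_powR => //; rewrite c1 andbT lt_neqAle eq_sym cn0.
Qed.

Lemma inj_succ n : injective (fun i : 'I_n => (i.+1)%:Z).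
Proof. by move=> i j /= h; apply: ord_inj; lia. Qed.

Lemma inj_neg n : injective (fun i : 'I_n => - (i : int)).
Proof. by move=> i j /= h; apply: ord_inj; lia. Qed.

Lemma absS (k : int) : 0 < k -> `|k|%N = (`|k|%N.-1).+1.
Proof. lia. Qed.

Lemma negbound (k : int) (i : nat) : k <= 0 -> (i < `|k|)%N ->
  k < - (i : int) /\ - (i : int) <= 0.
Proof. lia. Qed.

Lemma p_ne0 (R : realType) (p : R) : 2 < p -> p != 0.
Proof. move=> h; apply/eqP => p0; move: h; rewrite p0; lra. Qed.

Theorem proposition5p1
  (R : realType)
  (A : countType) (pA : A -> R) (hA : A -> nat) (xi theta p : R)
  (pA_ge0 : forall a, 0 <= pA a)
  (pA_sum1 : (\esum_(a in [set: A]) (pA a)%:E)%E = 1%E)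
  (hA_pos : forall a, (0 < hA a)%N)
  (hA_int : (\esum_(a in [set: A]) ((hA a)%:R * pA a)%:E < +oo)%E)
  (xi_gt0 : 0 < xi) (xi_lt1 : xi < 1)
  (theta_gt0 : 0 < theta) (theta_lt1 : theta < 1)
  (h_geom : forall n : nat, (0 < n)%N ->
     (\esum_(a in [set a | hA a = n]) (pA a)%:E)%E
       = (theta * (1 - theta) ^+ n.-1)%:E)
  (d : measure_display) (Omega : measurableType d) (POm : probability Omega R)
  (An : nat -> Omega -> A)
  (An_meas : forall n a, measurable (An n @^-1` [set a]))
  (An_law : forall n : nat, (0 < n)%N -> forall a : A,
     POm (An n @^-1` [set a]) =
       (if hA a == n then pA a / PA_h pA hA n else 0)%:E)
  (PD : probability (Dtype Omega) R)
  (PD_prod : is_product_measure POm theta PD)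
  (p_gt2 : 2 < p) :
  exists Cd : R, exists thd : R, 0 < Cd /\ 0 < thd /\ thd < 1 /\
    forall k : int,
      (\int[PD]_(x in [set: Dtype Omega])
          ereal_sup [set ((dDelta xi (gmap An x) (gmap An x')) `^ p)%:E
                     | x' in Dk k x]
       <= (Cd * thd ^+ `|k|%N)%:E)%E.
Proof.
set q := theta * xi + (1 - theta) * 1.
have q0 : 0 < q by rewrite /q mulr1; apply: ltr_wpDl; [apply: mulr_ge0; apply: ltW|lra].
have txi : theta * xi < theta by rewrite -[X in _ < X]mulr1 ltr_pM2l.
have txi0 : 0 <= theta * xi by apply: mulr_ge0; apply: ltW.
have q1 : q < 1 by rewrite /q mulr1; lra.
have xi0 : 0 <= xi by apply: ltW.
have xi1 : xi <= 1 by apply: ltW.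
have p1 : 1 <= p by lra.
exists q^-1, q; split; first by rewrite invr_gt0.
split => //; split => // k.
set S := fun x : Dtype Omega => ereal_sup [set ((dDelta xi (gmap An x) (gmap An x')) `^ p)%:E
                     | x' in Dk k x].
have S0 x : (0 <= S x)%E.
  apply: le_trans (ereal_sup_ubound _) => /=; last by exists x => //.
  by rewrite lee_fin powR_ge0.
have dpow u v : dDelta xi u v `^ p <= dDelta xi u v.
  by apply: powR_le_self; [exact: dDelta_ge0|exact: dDelta_le1|].
case: (ltP 0 k) => hk.
- pose phi := fun i : 'I_(`|k|%N.-1) => (i.+1)%:Z.
  have phi_inj : injective phi by exact: inj_succ.
  apply: le_trans (@le_integral_nm _ _ _ PD S
     (fun x => (\prod_(i < `|k|%N.-1) (if x.2 (phi i) then xi else 1))%:E) S0 _) _.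
    move=> x; apply: ge_ereal_sup => _ [x' hx' <-]; rewrite lee_fin.
    apply: (le_trans (dpow _ _ _)); exact: kpos_bound.
  rewrite (int_prod PD_prod phi_inj) // lee_fin -/q.
  rewrite [in X in _ <= X](absS hk).
  by rewrite exprS mulKf // gt_eqF.
- pose phi := fun i : 'I_(`|k|%N) => - (i : int).
  have phi_inj : injective phi by exact: inj_neg.
  apply: le_trans (@le_integral_nm _ _ _ PD S
     (fun x => (\prod_(i < `|k|%N) (if x.2 (phi i) then 0 else 1))%:E) S0 _) _.
    move=> x; apply: ge_ereal_sup => _ [x' hx' <-]; rewrite lee_fin.
    case: (pselect (exists j, k < j /\ j <= 0 /\ x.2 j)) => [H|H].
    + rewrite (kneg_eq xi0 xi1 An hk hx' H) /dDelta eqxx /= dX_refl powR0; last first.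
        exact: p_ne0.
      by apply: prodr_ge0 => i _; case: ifP.
    + rewrite big1; last first.
        move=> i _; case: ifP => // hi; exfalso; apply: H; exists (phi i).
        have [h1 h2] := negbound hk (ltn_ord i); by split; [|split].
      apply: (le_trans (dpow _ _ _)); exact: dDelta_le1.
  rewrite (int_prod PD_prod phi_inj) // lee_fin mulr0 add0r mulr1.
  have h1 : 1 - theta <= q by rewrite /q mulr1; lra.
  have h2 : (1 - theta) ^+ `|k|%N <= q ^+ `|k|%N.
    by apply: lerXn2r => //; rewrite nnegrE; [lra|exact: ltW].
  apply: le_trans h2 _; rewrite ler_pMl ?exprn_gt0 // invr_ge1 //; first exact: (ltW q1).
  by rewrite unitfE gt_eqF.
Qed.
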